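(* Let $\mathcal S_1\subsetneq\mathbb N$ be a numerical semigroup generated by $a_1<\dots<a_n$, where $a_1=\min(\mathcal S_1\setminus\{0\})$, and set $a=\min\{b\in\mathcal S_1: a_1\nmid b\}$. If $y\in\mathbb N$ satisfies $y+i\notin\mathcal S_1$ for every $i\in\{0,\dots,a-1\}$ with $a_1\nmid i$, then $y=0$.
   Context: A numerical semigroup is a submonoid of $\mathbb N$ with finite complement. Since $\mathcal S_1\ne\mathbb N$, $a_1\ge2$ and the element $a$ exists. *)

(* Defs.v *)
From mathcomp Require Import all_boot.
Set Implicit Arguments. Unset Strict Implicit. Unset Printing Implicit Defensive.

Definition numerical_semigroup (S : nat -> bool) : Prop :=
  [/\ S 0,
      (forall x y, S x -> S y -> S (x + y)) &
      exists N, forall m, N <= m -> S m].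

Definition generated_by (S : nat -> bool) (gs : seq nat) : Prop :=
  forall m, S m <->
    exists c : seq nat, size c = size gs /\
      m = \sum_(i < size gs) nth 0 c i * nth 0 gs i.

(* Main.v *)
Require Import Defs.
From mathcomp Require Import all_boot.
From mathcomp Require Import zify.

Theorem mainTheorem14 (S : nat -> bool) (gs : seq nat) (a1 a : nat) :
  numerical_semigroup S ->
  (exists m, ~~ S m) ->
  generated_by S gs ->
  sorted ltn gs ->
  a1 = head 0 gs ->
  (S a1 /\ 0 < a1 /\ forall b, S b -> 0 < b -> a1 <= b) ->
  (S a /\ ~~ (a1 %| a) /\ forall b, S b -> ~~ (a1 %| b) -> a <= b) ->
  forall y : nat,
    (forall i, i < a -> ~~ (a1 %| i) -> ~~ S (y + i)) ->
    y = 0.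
Proof.
move=> [S0 Sadd _] _ _ _ _ [Sa1 [a1p a1min]] [Sa [ndiv _]] y H.
have Smul : forall k, S (k * a1).
  elim=> [|k IH]; first by rewrite mul0n.
  by rewrite mulSn; apply: Sadd.
have a0 : 0 < a by rewrite lt0n; apply/eqP=> E; move: ndiv; rewrite E dvdn0.
have a1a : a1 < a.
  rewrite ltn_neqAle a1min // andbT; apply/eqP=> E; move: ndiv; by rewrite -E dvdnn.
case: y H => [//|y'] H; exfalso.
case: (boolP (a1 %| y'.+1)) => [/dvdnP [j Ej]|ndy].
- have j0 : 0 < j by case: j Ej.
  have := H (a - a1) ltac:(lia).
  have -> : y'.+1 + (a - a1) = a + (j.-1) * a1.
    rewrite Ej; case: j j0 {Ej} => // j _ /=; rewrite mulSn; lia.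
  rewrite Sadd // => /(_ _) /negP; apply => //.
  apply/negP=> /(dvdn_add (dvdnn a1)); rewrite subnKC ?(ltnW a1a) //.
  by apply/negP.
- have rp : 0 < y'.+1 %% a1 by rewrite lt0n -/(dvdn _ _).
  have rlt : y'.+1 %% a1 < a1 by rewrite ltn_mod.
  have := H (a1 - y'.+1 %% a1).
  have -> : y'.+1 + (a1 - y'.+1 %% a1) = (y'.+1 %/ a1).+1 * a1.
    rewrite {1}(divn_eq y'.+1 a1) mulSn; lia.
  rewrite Smul => /(_ _ _) /negP; apply => //.
    lia.
  apply/negP=> /dvdnP [q Eq]; have : 0 < a1 - y'.+1 %% a1 < a1 by lia.
  rewrite Eq; case: q {Eq} => [|q]; first by [].
  by rewrite mulSn; lia.
Qed.
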